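(* Let $\alpha>2$, let $K>0$ be a constant not depending on $\beta$, and let $\beta_{\min}>0$. Consider maximizing over $\beta\ge\beta_{\min}$ the (reduced) area spectral efficiency $$\mathcal{A}(\beta)=\ln(1+\beta)\,\beta^{-2/\alpha}\exp\left(-K\beta^{2/\alpha}\right).$$ Then the optimal decoding target is $\beta^*=\max(\beta_0,\beta_{\min})$, where $\beta_0>0$ satisfies $$-2K\beta_0^{2/\alpha}\ln(1+\beta_0)+\frac{\alpha\beta_0}{1+\beta_0}-2\ln(1+\beta_0)=0.$$
   Context: In the paper, $K=\int_{[s-d]^+}^{\infty}c_0(y,s)\,dy$, where $d$ is the secondary TX–RX distance, $s>0$ is a constant (arising from a mean-value decomposition of the ASE integral) treated as independent of $\beta$, and $c_0(y,s)=\frac{2\lambda_1P_1d^{\alpha}y^{-\alpha+1}}{P_2+P_1d^{\alpha}y^{-\alpha}}\arccos\left(\frac{s^2-d^2-y^2}{2dy}\right)$ if $|s-d|<y\le s+d$ and $c_0(y,s)=\frac{2\pi\lambda_1P_1d^{\alpha}y^{-\alpha+1}}{P_2+P_1d^{\alpha}y^{-\alpha}}$ otherwise ($\lambda_1$ primary density, $P_1,P_2$ transmit powers). $\beta_{\min}$ is the minimum decoding target guaranteeing primary protection. The function $\mathcal{A}$ is the secondary area spectral efficiency after removing factors independent of $\beta$. *)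

(* Defs.v *)
From Stdlib Require Import Reals.
Open Scope R_scope.

Definition ASE (alpha K beta : R) : R :=
  ln (1 + beta) * Rpower beta (- (2 / alpha)) * exp (- K * Rpower beta (2 / alpha)).

Definition beta0_eq (alpha K b : R) : Prop :=
  - 2 * K * Rpower b (2 / alpha) * ln (1 + b) + alpha * b / (1 + b)
    - 2 * ln (1 + b) = 0.

(* Main.v *)
Require Import Defs.
From Stdlib Require Import Reals Lra.
From Coquelicot Require Import Coquelicot.
Open Scope R_scope.

Definition Ff (alpha K x : R) :=
  alpha * x / ((1 + x) * ln (1 + x)) - 2 - 2 * K * exp (2 / alpha * ln x).
Definition uu (x : R) := (1 + x) * ln (1 + x) / x.

Lemma ln1p_pos x : 0 < x -> 0 < ln (1 + x).
Proof. intros; rewrite <- ln_1; apply ln_increasing; lra. Qed.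

Lemma ln1p_lt x : 0 < x -> ln (1 + x) < x.
Proof. intros. rewrite <- (ln_exp x) at 2. apply ln_increasing; [lra|].
 apply exp_ineq1; auto; lra. Qed.

Lemma uu_incr x y : 0 < x -> x < y -> uu x < uu y.
Proof.
 intros Hx Hxy.
 apply (incr_function uu (Finite 0) p_infty
   (fun x => (x - ln (1 + x)) / (x * x))); simpl; auto; try lra.
 - intros z Hz _. unfold uu. auto_derive.
   + repeat split; lra.
   + field. lra.
 - intros z Hz _. apply Rdiv_lt_0_compat. pose proof (ln1p_lt z Hz); lra.
   nra.
Qed.

Lemma uu_pos x : 0 < x -> 0 < uu x.
Proof. intros; unfold uu. pose proof (ln1p_pos x H).
 apply Rdiv_lt_0_compat; nra. Qed.

Lemma Ff_decr alpha K x y : 2 < alpha -> 0 < K -> 0 < x -> x < y ->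
  Ff alpha K y < Ff alpha K x.
Proof.
 intros Ha HK Hx Hxy. unfold Ff.
 assert (E: forall z, 0 < z -> alpha * z / ((1 + z) * ln (1 + z)) = alpha / uu z).
 { intros z Hz. unfold uu. pose proof (ln1p_pos z Hz). field. repeat split; lra. }
 rewrite !E by lra.
 pose proof (uu_incr x y Hx Hxy). pose proof (uu_pos x Hx).
 assert (alpha / uu y < alpha / uu x).
 { unfold Rdiv. apply Rmult_lt_compat_l. lra. apply Rinv_lt_contravar; nra. }
 assert (exp (2 / alpha * ln x) < exp (2 / alpha * ln y)).
 { apply exp_increasing. apply Rmult_lt_compat_l.
   apply Rdiv_lt_0_compat; lra. apply ln_increasing; lra. }
 nra.
Qed.

Lemma g_eq alpha K b : 0 < b ->
  - 2 * K * Rpower b (2 / alpha) * ln (1 + b) + alpha * b / (1 + b)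
    - 2 * ln (1 + b) = ln (1 + b) * Ff alpha K b.
Proof. intros. unfold Ff, Rpower. pose proof (ln1p_pos b H). field. lra. Qed.

Lemma ASE_deriv alpha K x : 2 < alpha -> 0 < x ->
  is_derive (ASE alpha K) x
   (Rpower x (- (2 / alpha)) * exp (- K * Rpower x (2 / alpha)) / (alpha * x)
     * (ln (1 + x) * Ff alpha K x)).
Proof.
 intros Ha Hx. unfold ASE, Rpower, Ff. auto_derive.
 - repeat split; lra.
 - pose proof (ln1p_pos x Hx). field. repeat split; lra.
Qed.

Lemma Cpos alpha K x : 2 < alpha -> 0 < x ->
  0 < Rpower x (- (2 / alpha)) * exp (- K * Rpower x (2 / alpha)) / (alpha * x).
Proof. intros. unfold Rpower. apply Rdiv_lt_0_compat; [|nra].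
 apply Rmult_lt_0_compat; apply exp_pos. Qed.

Lemma A_incr alpha K a b : 2 < alpha -> 0 < a -> a < b ->
  (forall c, a < c < b -> 0 < Ff alpha K c) -> ASE alpha K a < ASE alpha K b.
Proof.
 intros Ha Hpos Hab Hc.
 destruct (MVT_cor2 (ASE alpha K) (fun x => Rpower x (- (2 / alpha)) * exp (- K * Rpower x (2 / alpha)) / (alpha * x)
     * (ln (1 + x) * Ff alpha K x)) a b Hab) as [c [Hc1 Hc2]].
 { intros c Hc'. apply is_derive_Reals. apply ASE_deriv; lra. }
 assert (0 < Rpower c (- (2 / alpha)) * exp (- K * Rpower c (2 / alpha)) / (alpha * c)
     * (ln (1 + c) * Ff alpha K c)).
 { apply Rmult_lt_0_compat. apply Cpos; lra. apply Rmult_lt_0_compat.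
   apply ln1p_pos; lra. apply Hc; lra. }
 nra.
Qed.

Lemma A_decr alpha K a b : 2 < alpha -> 0 < a -> a < b ->
  (forall c, a < c < b -> Ff alpha K c < 0) -> ASE alpha K b < ASE alpha K a.
Proof.
 intros Ha Hpos Hab Hc.
 destruct (MVT_cor2 (ASE alpha K) (fun x => Rpower x (- (2 / alpha)) * exp (- K * Rpower x (2 / alpha)) / (alpha * x)
     * (ln (1 + x) * Ff alpha K x)) a b Hab) as [c [Hc1 Hc2]].
 { intros c Hc'. apply is_derive_Reals. apply ASE_deriv; lra. }
 assert (0 < Rpower c (- (2 / alpha)) * exp (- K * Rpower c (2 / alpha)) / (alpha * c)
     * (ln (1 + c) * - Ff alpha K c)).
 { apply Rmult_lt_0_compat. apply Cpos; lra. apply Rmult_lt_0_compat.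
   apply ln1p_pos; lra. specialize (Hc c ltac:(lra)). lra. }
 nra.
Qed.

Lemma Ff_cont alpha K x : 2 < alpha -> 0 < x -> continuity_pt (fun y => - Ff alpha K y) x.
Proof.
 intros Ha Hx. apply derivable_continuous_pt.
 exists (Derive (fun y => - Ff alpha K y) x). apply is_derive_Reals, Derive_correct.
 unfold Ff. auto_derive. pose proof (ln1p_pos x Hx). repeat split; try lra. apply Rgt_not_eq; nra.
Qed.

Lemma exists_root alpha K : 2 < alpha -> 0 < K ->
  exists b, 0 < b /\ Ff alpha K b = 0.
Proof.
 intros Ha HK.
 set (s := (alpha - 2) / (2 * (alpha + 2 * K))).
 assert (Hs0 : 0 < s). { unfold s. apply Rdiv_lt_0_compat; lra. }
 assert (Hs1 : s < 1). { unfold s. apply Rmult_lt_reg_r with (2 * (alpha + 2 * K)). lra.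
   field_simplify; lra. }
 assert (Hs2 : s * (2 + 4 * K) < alpha - 2).
 { unfold s. apply Rmult_lt_reg_r with (2 * (alpha + 2 * K)). lra.
   field_simplify; try lra. nra. }
 set (b1 := exp (alpha / 2 * ln s)).
 assert (Hb1 : 0 < b1) by apply exp_pos.
 assert (Hls : ln s < 0). { rewrite <- ln_1. apply ln_increasing; lra. }
 assert (Hb1s : b1 <= s).
 { unfold b1. rewrite <- (exp_ln s) at 2 by lra. apply Rlt_le, exp_increasing. nra. }
 assert (Hb1t : exp (2 / alpha * ln b1) = s).
 { unfold b1. rewrite ln_exp. replace (2 / alpha * (alpha / 2 * ln s)) with (ln s) by (field; lra).
   apply exp_ln; lra. }
 assert (F1 : - Ff alpha K b1 < 0).
 { unfold Ff. rewrite Hb1t.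
   pose proof (ln1p_lt b1 Hb1). pose proof (ln1p_pos b1 Hb1).
   assert (alpha / (1 + b1) <= alpha * b1 / ((1 + b1) * ln (1 + b1))).
   { assert (alpha * b1 / ((1 + b1) * ln (1 + b1)) - alpha / (1 + b1)
        = alpha * (b1 - ln (1 + b1)) / ((1 + b1) * ln (1 + b1))) by (field; lra).
     assert (0 <= alpha * (b1 - ln (1 + b1)) / ((1 + b1) * ln (1 + b1))).
     { apply Rlt_le, Rdiv_lt_0_compat; nra. }
     lra. }
   assert (alpha / (1 + s) <= alpha / (1 + b1)).
   { unfold Rdiv. apply Rmult_le_compat_l. lra. apply Rinv_le_contravar; lra. }
   assert (2 + 2 * K * s < alpha / (1 + s)).
   { assert (K * s * s < K * s) by (rewrite Rmult_assoc; apply Rmult_lt_compat_l; nra).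
     assert ((2 + 2 * K * s) * (1 + s) < alpha) by nra.
     apply Rmult_lt_reg_r with (1 + s). lra.
     replace (alpha / (1 + s) * (1 + s)) with alpha by (field; lra). lra. }
   lra. }
 set (b2 := exp alpha - 1).
 assert (Hb2 : alpha < b2). { unfold b2. pose proof (exp_ineq1 alpha ltac:(lra)). lra. }
 assert (F2 : 0 < - Ff alpha K b2).
 { unfold Ff. replace (1 + b2) with (exp alpha) by (unfold b2; ring). rewrite ln_exp.
   pose proof (exp_pos (2 / alpha * ln b2)). pose proof (exp_pos alpha).
   assert (alpha * b2 / (exp alpha * alpha) < 1).
   { apply Rmult_lt_reg_r with (exp alpha * alpha). nra. field_simplify; try lra.
     unfold b2; lra. }
   nra. }
 assert (Hb12 : b1 < b2) by lra.
 destruct (Ranalysis5.IVT_interv (fun y => - Ff alpha K y) b1 b2) as [z [Hz1 Hz2]]; auto.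
 { intros a Ha'. apply Ff_cont; lra. }
 exists z. split; lra.
Qed.

Theorem proposition3 (alpha K beta_min : R) :
  2 < alpha -> 0 < K -> 0 < beta_min ->
  (exists beta0 : R, 0 < beta0 /\ beta0_eq alpha K beta0) /\
  (forall beta0 : R, 0 < beta0 -> beta0_eq alpha K beta0 ->
     beta_min <= Rmax beta0 beta_min /\
     forall beta : R, beta_min <= beta ->
       ASE alpha K beta <= ASE alpha K (Rmax beta0 beta_min)).
Proof.
 intros Ha HK Hm. split.
 - destruct (exists_root alpha K Ha HK) as [b [Hb Hf]]. exists b. split; auto.
   unfold beta0_eq. rewrite g_eq by auto. rewrite Hf. ring.
 - intros b0 Hb0 Heq. unfold beta0_eq in Heq. rewrite g_eq in Heq by auto.
   assert (Hf : Ff alpha K b0 = 0).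
   { pose proof (ln1p_pos b0 Hb0). destruct (Rmult_integral _ _ Heq); auto; lra. }
   assert (Hlo : forall c, 0 < c < b0 -> 0 < Ff alpha K c).
   { intros c Hc. rewrite <- Hf. apply Ff_decr; lra. }
   assert (Hhi : forall c, b0 < c -> Ff alpha K c < 0).
   { intros c Hc. rewrite <- Hf. apply Ff_decr; lra. }
   split. apply Rmax_r.
   intros beta Hbeta.
   destruct (Rle_dec b0 beta_min) as [Hle|Hlt].
   + rewrite Rmax_right by auto.
     destruct (Req_dec beta beta_min) as [->|Hne]; [lra|].
     apply Rlt_le, A_decr; auto; try lra.
     intros c Hc; apply Hhi; lra.
   + rewrite Rmax_left by lra.
     destruct (Rtotal_order beta b0) as [H|[H|H]].
     * apply Rlt_le, A_incr; auto; try lra. intros c Hc; apply Hlo; lra.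
     * subst; lra.
     * apply Rlt_le, A_decr; auto; try lra. intros c Hc; apply Hhi; lra.
Qed.
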